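(* Let $D$ be a diagram of a knot $K$, let $n=\omega(D)$ be its Wirtinger number, and let $E=\{e_1,\dots,e_n\}$ be a generating set of seeds for $D$ with $n$ elements. For each finite Coxeter group $H$ with $r(H)=n$, fix a robust subset $\mathcal{A}_H\subseteq \mathrm{Gen}(H)$. Consider the following search: for every finite Coxeter group $H$ with $r(H)=n$, every $R\in\mathcal{A}_H$ and every bijection $f:E\to R$, label each seed $e_i$ by $f(e_i)$, extend the labeling along a complete coloring sequence starting from $E$ (at each coloring move with overstrand $o$ and understrands $u_1,u_2$, where $u_2$ is the newly colored strand, set the label of $u_2$ to $g_o g_{u_1} g_o$), and then test whether the resulting labeling of all strands is an $H$-coloring of $D$. Then $D$ exhibits a maximal rank quotient onto a finite Coxeter group, i.e. there is a finite Coxeter group $H$ with $r(H)=\omega(D)$ and a surjective homomorphism $\pi_1(S^3\setminus K)\twoheadrightarrow H$ sending meridians to reflections, if and only if this search finds some $H$, $R$ and $f$ for which the test succeeds. Moreover, the search succeeds for a given $H$ exactly when such a surjection onto that $H$ exists.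
   Context: A Coxeter group $C(\Gamma)$ is given by a finite simple graph $\Gamma$ with edges labeled by integers $>1$. It is generated by elements in bijection with the vertices of $\Gamma$, subject to the relations $s^2=1$ for every generator $s$ and $(st)^k=1$ whenever $s,t$ are joined by an edge of weight $k$. A reflection is any element conjugate to one of these generators. The Coxeter rank $r(G)$ is the minimal cardinality of a generating set of $G$ consisting of reflections. A homomorphism from a knot group to a Coxeter group is called good if it maps meridians to reflections. Diagram notions. The strands of a diagram $D$ are its arcs, i.e. the overstrands between undercrossings. At a crossing $c$ let $o$ be the overstrand and $u_1,u_2$ the two understrands. Given a set $W$ of ''colored'' strands, a coloring move at $c$ is possible when $o,u_1\in W$ and $u_2\notin W$; it replaces $W$ by $W\cup\{u_2\}$. A set of $n$ strands is a generating set of seeds if some sequence of coloring moves starting from it colors every strand of $D$; such a sequence is a complete coloring sequence. The Wirtinger number $\omega(D)$ is the smallest size of a generating set of seeds for $D$. For a group $G$, a $G$-coloring of $D$ by reflections is an assignment $s\mapsto g_s$ of a reflection $g_s\in G$ to each strand $s$ such that at every crossing with overstrand $o$ and understrands $u_1,u_2$ one has $g_o g_{u_1} g_o^{-1}=g_{u_2}$. Since reflections are involutions, this condition does not depend on orientations. Robust sets. $\mathrm{Gen}(H)$ is the set of all generating sets of $H$ that consist of exactly $r(H)$ reflections. Two such sets $\{r_i\}$ and $\{\rho_i\}$ are equivalent if there is $g\in H$ with $\{g^{-1}r_ig\}=\{\rho_i\}$. A subset $\mathcal{A}\subseteq\mathrm{Gen}(H)$ is robust if it contains at least one member of every equivalence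 class. *)

(* Defs.v *)
From HB Require Import structures.
From mathcomp Require Import all_boot all_fingroup.
Set Implicit Arguments. Unset Strict Implicit. Unset Printing Implicit Defensive.
Local Open Scope group_scope.

(* A diagram is given by its finite type of strands S and the list of its    *)
(* crossings, each crossing being a triple (o, u1, u2): overstrand o and the *)
(* two understrands u1, u2 (their order carries no meaning).                 *)

Record diagram := Diagram {
  strand : finType;
  crossings : seq (strand * strand * strand)
}.

Definition is_crossing (D : diagram) (o u1 u2 : strand D) : bool :=
  ((o, u1, u2) \in crossings D) || ((o, u2, u1) \in crossings D).

Definition move_ok (D : diagram) (W : {set strand D})
    (m : strand D * strand D * strand D) : bool :=
  let: (o, u1, u2) := m in
  [&& is_crossing o u1 u2, o \in W, u1 \in W & u2 \notin W].

Fixpoint valid_moves (D : diagram) (W : {set strand D})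
    (ms : seq (strand D * strand D * strand D)) : bool :=
  if ms is m :: ms' then move_ok W m && valid_moves (m.2 |: W) ms'
  else true.

Fixpoint colored_after (D : diagram) (W : {set strand D})
    (ms : seq (strand D * strand D * strand D)) : {set strand D} :=
  if ms is m :: ms' then colored_after (m.2 |: W) ms' else W.

Definition complete_coloring_seq (D : diagram) (E : {set strand D})
    (ms : seq (strand D * strand D * strand D)) : Prop :=
  valid_moves E ms /\ colored_after E ms = [set: strand D].

Definition generating_seeds (D : diagram) (E : {set strand D}) : Prop :=
  exists ms, complete_coloring_seq E ms.

Definition wirtinger_number (D : diagram) (n : nat) : Prop :=
  (exists E : {set strand D}, generating_seeds E /\ #|E| = n) /\
  (forall E : {set strand D}, generating_seeds E -> n <= #|E|).

(* Abstract groups (target of the universal property of a presentation).    *)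

Record grp := Grp {
  g_car : Type;
  g_mul : g_car -> g_car -> g_car;
  g_one : g_car;
  g_inv : g_car -> g_car;
  g_assoc : forall x y z, g_mul x (g_mul y z) = g_mul (g_mul x y) z;
  g_mul1 : forall x, g_mul g_one x = x;
  g_mulV : forall x, g_mul (g_inv x) x = g_one
}.

Fixpoint g_pow (G : grp) (x : g_car G) (k : nat) : g_car G :=
  if k is k'.+1 then g_mul x (g_pow x k') else g_one G.

(* Gamma has vertex set cx_V, and cx_m u v = 0 means "no edge", otherwise    *)
(* cx_m u v is the weight of the edge {u,v}. cx_gen v is the generator       *)
(* attached to v, living in a finite group type; the group is               *)
(* H = <<gen(V)>>.                                                           *)

Record coxeter_data := CoxData {
  cx_gT : finGroupType;
  cx_V : finType;
  cx_m : cx_V -> cx_V -> nat;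
  cx_gen : cx_V -> cx_gT
}.
Arguments cx_m : clear implicits.
Arguments cx_gen : clear implicits.

Definition cx_group (C : coxeter_data) : {group cx_gT C} :=
  <<[set cx_gen C v | v : cx_V C]>>%G.

Definition cx_graph_ok (C : coxeter_data) : Prop :=
  (forall u v, cx_m C u v = cx_m C v u) /\
  (forall v, cx_m C v v = 0%N) /\
  (forall u v, cx_m C u v <> 1%N).

(* H = <<gen(V)>> is presented by the generators gen(V) subject to the      *)
(* Coxeter relations s^2 = 1 and (st)^k = 1 for each edge of weight k;       *)
(* i.e. the relations hold in H, and H has the universal property of the     *)
(* presented group C(Gamma) (with respect to all groups).                    *)
Definition is_finite_coxeter (C : coxeter_data) : Prop :=
  cx_graph_ok C /\
  (forall v, cx_gen C v ^+ 2 = 1) /\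
  (forall u v, cx_m C u v != 0%N -> (cx_gen C u * cx_gen C v) ^+ cx_m C u v = 1) /\
  (forall (G : grp) (phi : cx_V C -> g_car G),
     (forall v, g_pow (phi v) 2 = g_one G) ->
     (forall u v, cx_m C u v != 0%N ->
        g_pow (g_mul (phi u) (phi v)) (cx_m C u v) = g_one G) ->
     exists psi : cx_gT C -> g_car G,
       (forall v, psi (cx_gen C v) = phi v) /\
       {in cx_group C &, forall x y, psi (x * y) = g_mul (psi x) (psi y)}).

Definition reflections (C : coxeter_data) : {set cx_gT C} :=
  [set cx_gen C v ^ h | v in [set: cx_V C], h in cx_group C].

Definition coxeter_rank (C : coxeter_data) : nat :=
  \big[minn/#|reflections C|]_(X : {set cx_gT C} |
       (X \subset reflections C) && (<<X>> == cx_group C :> {set _})) #|X|.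

Definition Gen (C : coxeter_data) : {set {set cx_gT C}} :=
  [set X : {set cx_gT C} | [&& X \subset reflections C,
                               <<X>> == cx_group C :> {set _} &
                               #|X| == coxeter_rank C]].

Definition robust (C : coxeter_data) (A : {set {set cx_gT C}}) : Prop :=
  A \subset Gen C /\
  forall X, X \in Gen C -> exists2 g, g \in cx_group C & X :^ g \in A.

Definition is_coloring (D : diagram) (C : coxeter_data)
    (c : strand D -> cx_gT C) : Prop :=
  (forall s, c s \in reflections C) /\
  (forall o u1 u2, (o, u1, u2) \in crossings D ->
     c o * c u1 * (c o)^-1 = c u2).

(* A good surjective homomorphism from the knot group onto H, through the   *)
(* Wirtinger presentation of the knot group associated with D (generators =  *)
(* strands = meridians): an assignment of reflections to the strands          *)
(* satisfying the Wirtinger relations, whose image generates H.               *)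
Definition good_surjection (D : diagram) (C : coxeter_data) : Prop :=
  exists c : strand D -> cx_gT C,
    is_coloring c /\ <<c @: [set: strand D]>> = cx_group C :> {set _}.

Fixpoint extend_labeling (D : diagram) (gT : finGroupType)
    (lab : strand D -> gT) (ms : seq (strand D * strand D * strand D))
    : strand D -> gT :=
  if ms is m :: ms' then
    let: (o, u1, u2) := m in
    extend_labeling (fun s => if s == u2 then lab o * lab u1 * lab o else lab s) ms'
  else lab.

Definition search_succeeds (D : diagram) (E : {set strand D})
    (ms : seq (strand D * strand D * strand D)) (C : coxeter_data)
    (A : {set {set cx_gT C}}) : Prop :=
  exists2 R, R \in A &
    exists f : strand D -> cx_gT C,
      [/\ {in E &, injective f}, f @: E = R &
          is_coloring (extend_labeling f ms)].

(* Main.v *)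
Require Import Defs.
From mathcomp Require Import all_boot all_fingroup.
Set Implicit Arguments. Unset Strict Implicit.
Local Open Scope group_scope.

Section Aux.
Variable D : diagram.
Variable gT : finGroupType.

Lemma ext_fix (W : {set strand D}) ms (lab : strand D -> gT) s :
  valid_moves W ms -> s \in W -> extend_labeling lab ms s = lab s.
Proof.
elim: ms W lab => [|[[o u1] u2] ms IH] W lab //= /andP[mok vm] sW.
move: mok => /and4P[_ _ _ u2W].
rewrite (IH _ _ vm); last by rewrite inE sW orbT.
- have -> : (s == u2) = false by apply/eqP => e; subst; rewrite sW in u2W.
  by [].
Qed.

Lemma ext_agree (W : {set strand D}) ms (lab c : strand D -> gT) :
  (forall o u1 u2, is_crossing o u1 u2 -> c u2 = c o * c u1 * c o) ->
  valid_moves W ms -> {in W, forall s, lab s = c s} ->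
  {in colored_after W ms, forall s, extend_labeling lab ms s = c s}.
Proof.
move=> Hc; elim: ms W lab => [|[[o u1] u2] ms IH] W lab //= /andP[mok vm] agr.
move: mok => /and4P[cr oW u1W _].
apply: IH => // s; rewrite !inE => /orP[/eqP->|sW]; first by rewrite eqxx agr // agr // (Hc _ _ _ cr).
by case: eqP => [->|_]; [rewrite agr // agr // (Hc _ _ _ cr) | exact: agr].
Qed.
End Aux.

Section Cox.
Variable C : coxeter_data.
Hypothesis HC : is_finite_coxeter C.

Lemma refl_group x : x \in reflections C -> x \in cx_group C.
Proof.
case/imset2P => v h _ hG ->; apply: groupJ => //.
by apply: mem_gen; apply: imset_f.
Qed.

Lemma refl_inv x : x \in reflections C -> x^-1 = x.
Proof.
case: HC => _ [H2 _].
case/imset2P => v h _ hG ->.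
apply/eqP; rewrite eq_invg_mul -conjMg.
by have := H2 v; rewrite expgS expg1 => ->; rewrite conj1g.
Qed.

Lemma reflJ x g : x \in reflections C -> g \in cx_group C -> x ^ g \in reflections C.
Proof.
case/imset2P => v h vV hG -> gG.
by rewrite -conjgM; apply: imset2_f => //; apply: groupM.
Qed.

Lemma rank_le (X : {set cx_gT C}) : X \subset reflections C -> <<X>> = cx_group C :> {set _} ->
  coxeter_rank C <= #|X|.
Proof.
move=> s g; rewrite /coxeter_rank.
have PX : (X \subset reflections C) && (<<X>> == cx_group C :> {set _}).
  by rewrite s /= g eqxx.
rewrite /index_enum; move: (mem_index_enum X); rewrite /index_enum.
elim: (Finite.enum _) => [//|a r IH]; rewrite inE big_cons => /orP[/eqP<-|Xr].
  by rewrite PX geq_minl.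
case: ifP => _; last exact: IH.
by rewrite geq_min IH ?orbT.
Qed.
End Cox.

Lemma coloring_ext (D : diagram) (C : coxeter_data) (c c' : strand D -> cx_gT C) :
  (forall s, c s = c' s) -> is_coloring c -> is_coloring c'.
Proof.
move=> e [h1 h2]; split=> [s|o u1 u2 cr]; rewrite -!e //; exact: h2.
Qed.

Theorem mainTheorem1 (D : diagram) (n : nat) (E : {set strand D})
    (ms : seq (strand D * strand D * strand D))
    (A : forall C : coxeter_data, {set {set cx_gT C}}) :
  wirtinger_number D n ->
  #|E| = n ->
  complete_coloring_seq E ms ->
  (forall C, is_finite_coxeter C -> coxeter_rank C = n -> robust (A C)) ->
  ((exists C, [/\ is_finite_coxeter C, coxeter_rank C = n & good_surjection D C])
     <->
   (exists C, [/\ is_finite_coxeter C, coxeter_rank C = n &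
                  search_succeeds E ms (A C)]))
  /\
  (forall C, is_finite_coxeter C -> coxeter_rank C = n ->
     (search_succeeds E ms (A C) <-> good_surjection D C)).
Proof.
move=> _ cardE [vm allc] Hrob.
suff P2 : forall C, is_finite_coxeter C -> coxeter_rank C = n ->
     (search_succeeds E ms (A C) <-> good_surjection D C).
  split; last exact: P2.
  split=> [[C [h1 h2 h3]]|[C [h1 h2 h3]]]; exists C; split => //.
    exact: (proj2 (P2 C h1 h2) h3).
  exact: (proj1 (P2 C h1 h2) h3).
move=> C HC rk; have [sub rob] := Hrob C HC rk.
split.
- case=> R RA [f [finj fE col]]; exists (extend_labeling f ms); split => //.
  have RG : R \in Gen C by apply: (subsetP sub).
  move: RG; rewrite inE => /and3P[_ /eqP gR _].
  apply/eqP; rewrite eqEsubset; apply/andP; split.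
  + rewrite gen_subG; apply/subsetP => x /imsetP[s _ ->].
    by apply: refl_group => //; case: col.
  + rewrite -gR genS //; apply/subsetP => x; rewrite -fE => /imsetP[s sE ->].
    by rewrite -(ext_fix f vm sE); apply: imset_f.
- case=> c [[cref ccr] gen].
  have Hc : forall o u1 u2, is_crossing o u1 u2 -> c u2 = c o * c u1 * c o.
    move=> o u1 u2 /orP[cr|cr].
      by rewrite -(ccr _ _ _ cr) (refl_inv HC (cref o)).
    rewrite -(ccr _ _ _ cr) (refl_inv HC (cref o)) -!mulgA.
    have o2 : c o * c o = 1.
      by rewrite -{1}(refl_inv HC (cref o)) mulVg.
    by rewrite !mulgA o2 mul1g -mulgA o2 mulg1.
  have genE : <<c @: E>> = cx_group C :> {set _}.
    apply/eqP; rewrite eqEsubset; apply/andP; split.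
      rewrite gen_subG; apply/subsetP => x /imsetP[s _ ->].
      exact: refl_group (cref s).
    rewrite -gen gen_subG; apply/subsetP => x /imsetP[s _ ->].
    have : s \in colored_after E ms by rewrite allc inE.
    move=> sin.
    have := @ext_agree D _ E ms c c Hc vm (fun _ _ => erefl) s sin.
    move=> _.
    suff inv : forall W ms', valid_moves W ms' -> W \subset [set s | c s \in <<c @: E>>] ->
        colored_after W ms' \subset [set s | c s \in <<c @: E>>].
      have := inv E ms vm; rewrite allc => h.
      have : s \in [set s | c s \in <<c @: E>>].
        have hE : E \subset [set s | c s \in <<c @: E>>].
          by apply/subsetP => t tE; rewrite inE mem_gen // imset_f.
        by apply: (subsetP (h hE)); rewrite inE.
      by rewrite inE.
    move=> W0 ms0; elim: ms0 W0 => [|[[o u1] u2] ms' IH] W /=; first by [].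
    move=> /andP[/and4P[cr oW u1W _] vm'] WS.
    apply: IH => //; apply/subsetP => t; rewrite !inE => /orP[/eqP->|tW].
      rewrite (Hc _ _ _ cr) !groupM //.
      - by move: (subsetP WS o oW); rewrite inE.
      - by move: (subsetP WS u1 u1W); rewrite inE.
      - by move: (subsetP WS o oW); rewrite inE.
    by move: (subsetP WS t tW); rewrite inE.
  have subR : c @: E \subset reflections C.
    by apply/subsetP => x /imsetP[s _ ->].
  have le1 := rank_le subR genE.
  have le2 : #|c @: E| <= #|E| := leq_imset_card _ _.
  have eqc : #|c @: E| = #|E| by apply/eqP; rewrite eqn_leq le2 cardE -rk le1.
  have cinj : {in E &, injective c} by apply/imset_injP; rewrite eqc.
  have cG : c @: E \in Gen C by rewrite inE subR genE eqxx /= eqc cardE rk.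
  have [g gG RA] := rob _ cG.
  exists ((c @: E) :^ g) => //.
  exists (fun s => c s ^ g); split.
  + by move=> x y xE yE /conjg_inj; apply: cinj.
  + by rewrite /conjugate -imset_comp.
  + apply: (@coloring_ext _ _ (fun s => c s ^ g)).
      move=> s; symmetry; apply: (@ext_agree D _ E ms _ (fun s => c s ^ g)) => //.
      * by move=> o u1 u2 cr; rewrite (Hc _ _ _ cr) !conjMg.
      * by rewrite allc inE.
    split=> [s|o u1 u2 cr]; first exact: reflJ.
    by rewrite -conjVg -!conjMg (ccr _ _ _ cr).
Qed.
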